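(* Let $M$ be a nearly finitary matroid on ground set $E$ that is not $n$-nearly finitary for any $n\in\mathbb{N}$, and let $S\subseteq E$ be finite. Then the deletion $M-S$ is a nearly finitary matroid that is not $n$-nearly finitary for any $n\in\mathbb{N}$.
   Context: Matroids (possibly infinite): $\emptyset$ independent; subsets of independent sets independent; if $B$ is maximal independent and $A$ non-maximal independent, then $A\cup\{b\}$ is independent for some $b\in B\setminus A$; for independent $A\subseteq X\subseteq E$ there is a maximal independent $S'$ with $A\subseteq S'\subseteq X$. Bases are maximal independent sets. The deletion $M-S$ is the matroid on $E\setminus S$ whose independent sets are the independent sets of $M$ contained in $E\setminus S$. The finitarization $M^{\mathrm{fin}}$ has as independent sets those sets all of whose finite subsets are independent in $M$. $M$ is nearly finitary if $F\setminus B$ is finite whenever a base $F$ of $M^{\mathrm{fin}}$ contains a base $B$ of $M$; $n$-nearly finitary if $|F\setminus B|\le n$ for all such pairs. *)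

(* Defs.v *)
From Stdlib Require Import List Arith.

Definition subset {T} (A B : T -> Prop) : Prop := forall x, A x -> B x.
Definition setminus {T} (A B : T -> Prop) : T -> Prop := fun x => A x /\ ~ B x.
Definition set_add {T} (A : T -> Prop) (b : T) : T -> Prop := fun x => A x \/ x = b.
Definition emptyset {T} : T -> Prop := fun _ => False.

Definition finite {T} (A : T -> Prop) : Prop :=
  exists l : list T, forall x, A x -> In x l.

Definition card_le {T} (A : T -> Prop) (n : nat) : Prop :=
  exists l : list T, length l <= n /\ forall x, A x -> In x l.

Definition is_base {T} (I : (T -> Prop) -> Prop) (B : T -> Prop) : Prop :=
  I B /\ forall B', I B' -> subset B B' -> subset B' B.

Definition maximal_in {T} (I : (T -> Prop) -> Prop) (X S : T -> Prop) : Prop :=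
  I S /\ subset S X /\
  forall S', I S' -> subset S S' -> subset S' X -> subset S' S.

Definition is_matroid {T} (E : T -> Prop) (I : (T -> Prop) -> Prop) : Prop :=
  (forall A, I A -> subset A E) /\
  I emptyset /\
  (forall A B, I A -> subset B A -> I B) /\
  (forall A B, I A -> ~ is_base I A -> is_base I B ->
     exists b, B b /\ ~ A b /\ I (set_add A b)) /\
  (forall A X, I A -> subset A X -> subset X E ->
     exists S', subset A S' /\ maximal_in I X S').

Definition del_ground {T} (E S : T -> Prop) : T -> Prop := setminus E S.
Definition del_indep {T} (E : T -> Prop) (I : (T -> Prop) -> Prop) (S : T -> Prop)
  : (T -> Prop) -> Prop :=
  fun A => I A /\ subset A (setminus E S).

Definition fin_indep {T} (E : T -> Prop) (I : (T -> Prop) -> Prop)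
  : (T -> Prop) -> Prop :=
  fun A => subset A E /\ forall F, subset F A -> finite F -> I F.

Definition nearly_finitary {T} (E : T -> Prop) (I : (T -> Prop) -> Prop) : Prop :=
  forall F B, is_base (fin_indep E I) F -> is_base I B -> subset B F ->
    finite (setminus F B).

Definition n_nearly_finitary {T} (n : nat) (E : T -> Prop) (I : (T -> Prop) -> Prop)
  : Prop :=
  forall F B, is_base (fin_indep E I) F -> is_base I B -> subset B F ->
    card_le (setminus F B) n.

(* Main.v *)
Require Import Defs.
From Stdlib Require Import List Arith Lia Classical FunctionalExtensionality PropExtensionality.

Definition res {T} (I : (T -> Prop) -> Prop) (Y : T -> Prop) : (T -> Prop) -> Prop :=
  fun A => I A /\ subset A Y.

Lemma not_base_ex {T} (I : (T->Prop)->Prop) A :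
  (forall A B, I A -> subset B A -> I B) -> I A -> ~ is_base I A ->
  exists x, ~ A x /\ I (set_add A x).
Proof.
  intros Hd HA Hn. unfold is_base, subset in Hn.
  apply not_and_or in Hn as [H|H]; [contradiction|].
  apply not_all_ex_not in H as [B' H].
  apply imply_to_and in H as [HB' H].
  apply imply_to_and in H as [HAB H].
  apply not_all_ex_not in H as [x H].
  apply imply_to_and in H as [Hx Hnx].
  exists x. split; auto. apply (Hd B'); auto.
  intros y [Hy|Hy]; [auto|subst; auto].
Qed.

Lemma extend_base {T} (E : T -> Prop) I A : is_matroid E I -> I A ->
  exists B, subset A B /\ is_base I B.
Proof.
  intros HM HA. pose proof HM as (HE & H0 & Hd & H3 & HIM).
  destruct (HIM A E HA (HE A HA) (fun x h => h)) as [B [HAB [HB [HBE HBm]]]].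
  exists B. split; [exact HAB|]. split; [exact HB|]. intros B' HB' HBB'. apply HBm; auto.
Qed.

Lemma RI3 {T} (E : T -> Prop) I (Y A B : T -> Prop) x : is_matroid E I -> I A -> subset A Y ->
  Y x -> ~ A x -> I (set_add A x) -> maximal_in I Y B ->
  exists b, B b /\ ~ A b /\ I (set_add A b).
Proof.
 intros HM HA HAY Hx Hnx HAx [HB [HBY HBmax]].
 pose proof HM as (HE & H0 & Hd & H3 & HIM).
 destruct (extend_base E I B HM HB) as [B' [HBB' HB']].
 assert (Hcap : forall y, B' y -> Y y -> B y).
 { intros y Hy1 Hy2. apply (HBmax (fun z => B' z /\ Y z)).
   - apply (Hd B'); [apply HB'|]. intros z [? ?]; auto.
   - intros z Hz; split; auto.
   - intros z [? ?]; auto.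
   - split; auto. }
 pose (K := fun y => B' y /\ ~ Y y).
 pose (Z := fun y => set_add A x y \/ K y).
 assert (HZE : subset Z E).
 { intros y [Hy|[Hy _]]. apply (HE _ HAx y Hy). apply (HE _ (proj1 HB') y Hy). }
 destruct (HIM (set_add A x) Z HAx (fun y h => or_introl h) HZE) as [J [HAJ [HJ [HJZ HJmax]]]].
 destruct (classic (is_base I J)) as [HJb|HJb].
 - pose (L := fun y => B y \/ (J y /\ K y)).
   assert (HL : I L). { apply (Hd B'); [apply HB'|]. intros y [Hy|[_ [Hy _]]]; auto. }
   destruct (classic (is_base I L)) as [HLb|HLb].
   + assert (HKJ : forall k, K k -> J k).
     { intros k Hk. assert (Lk: L k).
       { apply (proj2 HLb B' (proj1 HB')); [intros z [Hz|[_ [Hz _]]]; auto | apply Hk]. }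
       destruct Lk as [Hk'|[Hk' _]]; auto. exfalso. destruct Hk as [_ Hk]. apply Hk. apply HBY; auto. }
     pose (A2 := fun y => A y \/ K y).
     assert (HA2 : I A2). { apply (Hd J _ HJ). intros y [Hy|Hy]. apply HAJ; left; auto. auto. }
     assert (HA2b : ~ is_base I A2).
     { intros Hb. assert (HJx : J x) by (apply HAJ; right; reflexivity).
       assert (HA2x : A2 x).
       { apply (proj2 Hb J HJ); [intros y [Hy|Hy]; [apply HAJ; left; auto | auto] | auto]. }
       destruct HA2x as [H1|[_ H1]]; auto. }
     destruct (H3 A2 B' HA2 HA2b HB') as [b [Hb1 [Hb2 Hb3]]].
     exists b. assert (HYb : Y b). { apply NNPP. intro. apply Hb2. right. split; auto. }
     split; [apply Hcap; auto|]. split. intro; apply Hb2; left; auto.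
     apply (Hd _ _ Hb3). intros y [Hy|Hy]; [left; left; auto| right; auto].
   + destruct (H3 L J HL HLb HJb) as [j [Hj1 [Hj2 Hj3]]].
     exfalso. apply Hj2. left.
     assert (HjZ := HJZ j Hj1). destruct HjZ as [Hj|Hj].
     * apply (HBmax (set_add B j)).
       -- apply (Hd _ _ Hj3). intros y [Hy|Hy]; [left; left; auto|right; auto].
       -- intros y Hy; left; auto.
       -- intros y [Hy|Hy]; auto. subst y. destruct Hj as [Hj|Hj]; [apply HAY; auto| subst; auto].
       -- right; reflexivity.
     * exfalso. apply Hj2. right. split; auto.
 - destruct (H3 J B' HJ HJb HB') as [b [Hb1 [Hb2 Hb3]]].
   destruct (classic (Y b)) as [HYb|HYb].
   + exists b. split; [apply Hcap; auto|]. split. intro; apply Hb2; apply HAJ; left; auto.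
     apply (Hd _ _ Hb3). intros y [Hy|Hy]; [left; apply HAJ; left; auto | right; auto].
   + exfalso. apply Hb2. apply (HJmax (set_add J b) Hb3).
     * intros y Hy; left; auto.
     * intros y [Hy|Hy]; [apply HJZ; auto | subst; right; split; auto].
     * right; reflexivity.
Qed.

Lemma finbase_base {T} (E : T -> Prop) I (F B2 : T -> Prop) : is_matroid E I ->
  is_base (fin_indep E I) F -> maximal_in I F B2 -> is_base I B2.
Proof.
 intros HM [[HFE HFi] HFmax] [HB2 [HB2F HB2max]].
 pose proof HM as (HE & H0 & Hd & H3 & HIM).
 apply NNPP; intro Hn.
 destruct (not_base_ex I B2 Hd HB2 Hn) as [e [He HB2e]].
 assert (HnFe : ~ F e).
 { intro. apply He. apply (HB2max _ HB2e);
   [intros y Hy; left; auto | intros y [Hy|Hy]; [auto|subst; auto] | right; reflexivity]. }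
 assert (HeE : E e) by (apply (HE _ HB2e); right; reflexivity).
 assert (Hnfi : ~ fin_indep E I (set_add F e)).
 { intro Hfi. apply HnFe. apply (HFmax _ Hfi); [intros y Hy; left; auto| right; reflexivity]. }
 assert (HDex : exists D, subset D (set_add F e) /\ finite D /\ ~ I D).
 { apply NNPP. intro Hno. apply Hnfi. split.
   - intros y [Hy|Hy]; [auto|subst; auto].
   - intros D HD HDf. apply NNPP. intro. apply Hno. exists D; auto. }
 destruct HDex as [D [HD1 [HD2 HD3]]].
 pose (D' := fun y => D y /\ y <> e).
 assert (HD'F : subset D' F).
 { intros y [Hy1 Hy2]. destruct (HD1 y Hy1); [auto| contradiction]. }
 assert (HD' : I D').
 { apply HFi. auto.
   destruct HD2 as [l Hl]. exists l. intros y [Hy _]. auto. }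
 destruct (HIM D' F HD' HD'F HFE) as [J [HD'J [HJ [HJF HJm]]]].
 assert (HJmax' : maximal_in I (set_add F e) J).
 { split; [auto|split]. intros y Hy; left; auto.
   intros G HG HJG HGF y Hy.
   assert (HGe : ~ G e).
   { intro HGe. apply HD3. apply (Hd G _ HG). intros z Hz. destruct (classic (z = e)).
     subst; auto. apply HJG. apply HD'J. split; auto. }
   apply (HJm G HG HJG); auto. intros z Hz. destruct (HGF z Hz); [auto| subst; contradiction]. }
 destruct (RI3 E I (set_add F e) B2 J e HM HB2 (fun y h => or_introl (HB2F y h))
   (or_intror eq_refl) He HB2e HJmax') as [b [Hb1 [Hb2 Hb3]]].
 apply Hb2. apply (HB2max _ Hb3);
   [intros y Hy; left; auto| intros y [Hy|Hy]; [auto|subst; apply HJF; auto] | right; reflexivity].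
Qed.

Lemma not_max_ex {T} (I : (T->Prop)->Prop) Y A :
  I A -> subset A Y -> ~ maximal_in I Y A -> (forall A B, I A -> subset B A -> I B) ->
  exists x, Y x /\ ~ A x /\ I (set_add A x).
Proof.
  intros HA HAY Hn Hd. unfold maximal_in, subset in Hn.
  apply not_and_or in Hn as [H|H]; [contradiction|].
  apply not_and_or in H as [H|H]; [contradiction|].
  apply not_all_ex_not in H as [B' H].
  apply imply_to_and in H as [HB' H].
  apply imply_to_and in H as [HAB H].
  apply imply_to_and in H as [HBY H].
  apply not_all_ex_not in H as [x H].
  apply imply_to_and in H as [Hx Hnx].
  exists x. split; auto. split; auto. apply (Hd B'); auto.
  intros y [Hy|Hy]; [auto|subst; auto].
Qed.

Lemma res_matroid {T} (E : T -> Prop) I (Y : T -> Prop) : is_matroid E I -> subset Y E ->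
  is_matroid Y (res I Y).
Proof.
  intros HM HYE. pose proof HM as (HE & H0 & Hd & H3 & HIM).
  split; [|split; [|split; [|split]]].
  - intros A [_ H]; auto.
  - split; auto. intros x [].
  - intros A B [HA HAY] HBA. split. apply (Hd A); auto. intros x Hx; auto.
  - intros A B [HA HAY] Hnb [[HB HBY] HBm].
    destruct (not_base_ex (res I Y) A) as [x [Hx1 [Hx2 Hx3]]].
    { intros A0 B0 [H1 H2] H. split. apply (Hd A0); auto. intros z Hz; auto. }
    { split; auto. } { auto. }
    destruct (RI3 E I Y A B x HM HA HAY (Hx3 x (or_intror eq_refl)) Hx1 Hx2) as [b [Hb1 [Hb2 Hb3]]].
    { split; auto. split; auto. intros S' HS' HBS' HS'Y. apply HBm; auto. split; auto. }
    exists b. split; auto. split; auto. split; auto. intros z [Hz|Hz]; auto. subst; auto.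
  - intros A X [HA HAY] HAX HXY.
    destruct (HIM A X HA HAX (fun z h => HYE z (HXY z h))) as [S' [HAS [HS [HSX HSm]]]].
    exists S'. split; auto. split; [split; auto|split; auto].
    intros z Hz; auto.
    intros G [HG _] HSG HGX. auto.
Qed.

Lemma greedy {T} (P : (T->Prop) -> Prop) (Pdown : forall A B, P A -> subset B A -> P B) :
  forall l A, P A -> exists C, subset A C /\ (forall y, C y -> A y \/ In y l) /\ P C /\
    (forall s, In s l -> P (set_add C s) -> C s).
Proof.
  induction l as [|a l IH]; intros A HA.
  - exists A. split; [intros y h; auto|]. split; [auto|]. split; auto. intros s [].
  - destruct (classic (P (set_add A a))) as [Ha|Ha].
    + destruct (IH _ Ha) as [C [H1 [H2 [H3 H4]]]].
      exists C. split; [intros y h; apply H1; left; auto|]. split.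
      { intros y Hy. destruct (H2 y Hy) as [[h|h]|h]; auto. subst; right; left; auto. right; right; auto. }
      split; auto. intros s [Hs|Hs] HP. subst. apply H1; right; auto. auto.
    + destruct (IH _ HA) as [C [H1 [H2 [H3 H4]]]].
      exists C. split; auto. split.
      { intros y Hy. destruct (H2 y Hy); auto. right; right; auto. }
      split; auto. intros s [Hs|Hs] HP. subst. exfalso. apply Ha. apply (Pdown _ _ HP).
      intros z [hz|hz]; [left; auto|right; auto]. auto.
Qed.

Lemma part2 {T} (E : T -> Prop) I (S : T -> Prop) l : is_matroid E I -> nearly_finitary E I ->
  (forall x, S x -> In x l) ->
  nearly_finitary (setminus E S) (res I (setminus E S)).
Proof.
  intros HM Hnf Hl F B [[HFX HFi] HFm] [[HB HBX] HBm] HBF.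
  idtac.
  pose proof HM as (HE & H0 & Hd & H3 & HIM).
  assert (Pdown : forall A B, fin_indep E I A -> subset B A -> fin_indep E I B).
  { intros A0 B0 [h1 h2] h. split. intros z hz; auto. intros D HD HDf. apply h2; auto. intros z hz; auto. }
  assert (HPF : fin_indep E I F).
  { split. intros z hz; apply (HFX z hz). intros D HD HDf. apply (HFi D HD HDf). }
  destruct (greedy _ Pdown l F HPF) as [F' [HFF' [HF'2 [HF' HF'm]]]].
  assert (HF'b : is_base (fin_indep E I) F').
  { split; auto. intros G HG HF'G y Hy.
    destruct (classic (S y)) as [HSy|HSy].
    - apply HF'm. auto. apply (Pdown G); auto. intros z [hz|hz]; auto. subst; auto.
    - apply HFF'. apply (HFm (fun z => G z /\ ~ S z)).
      + split. intros z [hz1 hz2]. split; auto. apply (proj1 HG z hz1).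
        intros D HD HDf. split. apply (proj2 HG D); auto. intros z hz; apply (HD z hz).
        intros z hz. destruct (HD z hz). split; auto. apply (proj1 HG z); auto.
      + intros z hz. split. apply HF'G, HFF'; auto. apply (proj2 (HFX z hz)).
      + split; auto. }
  destruct (HIM B F' HB (fun z h => HFF' z (HBF z h)) (proj1 HF')) as [B2 [HBB2 HB2m]].
  pose proof (finbase_base E I F' B2 HM HF'b HB2m) as HB2b.
  destruct (Hnf F' B2 HF'b HB2b (proj1 (proj2 HB2m))) as [l' Hl'].
  exists l'. intros y [HFy HBy]. apply Hl'. split. apply HFF'; auto.
  intro HB2y. apply HBy. apply (HBm (fun z => B2 z /\ setminus E S z)).
  - split. apply (Hd B2). apply (proj1 HB2m). intros z [hz _]; auto. intros z [_ hz]; auto.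
  - intros z hz. split; auto.
  - split; auto.
Qed.

Lemma card_le_mono {T} (A : T -> Prop) n m : card_le A n -> n <= m -> card_le A m.
Proof. intros [l [h1 h2]] h. exists l. split; auto. lia. Qed.

Lemma find_dep {T} I (X Z : T -> Prop) : subset Z X -> ~ fin_indep X (res I X) Z ->
  exists D, subset D Z /\ finite D /\ ~ I D.
Proof.
  intros HZ Hn. apply NNPP. intro Hno. apply Hn. split; auto.
  intros D HD HDf. split. apply NNPP. intro. apply Hno. exists D; auto.
  intros z hz; auto.
Qed.

Lemma fin2 {T} (E : T -> Prop) I (F' De Dy : T->Prop) s e y : is_matroid E I ->
 (forall D, subset D F' -> finite D -> I D) -> F' s -> ~F' e -> ~F' y -> y <> e ->
 subset De (set_add F' e) -> finite De -> ~I De ->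
 subset Dy (set_add F' y) -> finite Dy -> ~I Dy ->
 (forall D, subset D (fun z => (F' z /\ z <> s) \/ z = e \/ z = y) -> finite D -> I D) -> False.
Proof.
  intros HM HFI HF's HF'e HF'y Hye HDe1 [le Hle] HDe3 HDy1 [ly Hly] HDy3 HGI.
  pose proof HM as (HE & H0 & Hd & H3 & HIM).
  pose (W0 := fun z => (F' z /\ z <> s) /\ (De z \/ Dy z)).
  pose (P := fun z => W0 z \/ z = s).
  pose (Q := fun z => W0 z \/ z = e).
  pose (W := fun z => W0 z \/ z = s \/ z = e \/ z = y).
  assert (HP : I P).
  { apply HFI. intros z [[[h _] _]|h]; [auto|subst; auto].
    exists (s :: le ++ ly). intros z [[_ [h|h]]|h].
    right; apply in_or_app; left; auto. right; apply in_or_app; right; auto. left; auto. }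
  assert (HQy : I (set_add Q y)).
  { apply HGI. intros z [[[h _]|h]|h]; auto.
    exists (e :: y :: le ++ ly). intros z [[[_ [h|h]]|h]|h].
    right; right; apply in_or_app; left; auto. right; right; apply in_or_app; right; auto.
    left; auto. right; left; auto. }
  assert (HPe : ~ I (set_add P e)).
  { intro H. apply HDe3. apply (Hd _ _ H). intros z hz. destruct (HDe1 z hz) as [h|h].
    - destruct (classic (z = s)). left; right; auto. left; left. split; [split|left]; auto.
    - right; auto. }
  assert (HPy : ~ I (set_add P y)).
  { intro H. apply HDy3. apply (Hd _ _ H). intros z hz. destruct (HDy1 z hz) as [h|h].
    - destruct (classic (z = s)). left; right; auto. left; left. split; [split|right]; auto.
    - right; auto. }
  assert (HPmax : maximal_in I W P).
  { split; auto. split. intros z [h|h]; [left; auto| right; left; auto].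
    intros G HG HPG HGW z hz. destruct (HGW z hz) as [h|[h|[h|h]]].
    - left; auto.
    - right; auto.
    - exfalso. apply HPe. apply (Hd G); auto. intros w [hw|hw]; [apply HPG; auto | subst; auto].
    - exfalso. apply HPy. apply (Hd G); auto. intros w [hw|hw]; [apply HPG; auto | subst; auto]. }
  assert (HQ : I Q). { apply (Hd _ _ HQy). intros z hz; left; auto. }
  assert (HnQy : ~ Q y). { intros [[[h _] _]|h]; auto. }
  destruct (RI3 E I W Q P y HM HQ (fun z h => match h with or_introl a => or_introl a | or_intror b => or_intror (or_intror (or_introl b)) end)
     (or_intror (or_intror (or_intror eq_refl))) HnQy HQy HPmax) as [b [Hb1 [Hb2 Hb3]]].
  destruct Hb1 as [Hb1|Hb1]. apply Hb2; left; auto. subst b.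
  apply HDe3. apply (Hd _ _ Hb3). intros z hz. destruct (HDe1 z hz) as [h|h].
  - destruct (classic (z = s)). right; auto. left; left. split; [split|left]; auto.
  - left; right; auto.
Qed.

Lemma step {T} (E : T -> Prop) I (X X' : T->Prop) s n : is_matroid E I -> subset X E -> subset X' X ->
  (forall y, X y -> ~ X' y -> y = s) -> n_nearly_finitary n X' (res I X') ->
  n_nearly_finitary (n + 2) X (res I X).
Proof.
  intros HM HXE HX'X Hs Hn F' B' HF'b HB'b HB'F'.
  pose proof HM as (HE & H0 & Hd & H3 & HIM).
  destruct HF'b as [[HF'X HF'i] HF'm].
  pose proof HB'b as [[HB' HB'X] HB'm].
  assert (HX'E : subset X' E) by (intros z hz; apply HXE, HX'X; auto).
  pose proof (res_matroid E I X HM HXE) as HMX.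
  pose proof (res_matroid E I X' HM HX'E) as HMX'.
  destruct (classic (forall y, F' y -> X' y)) as [Hsub|Hsub].
  { apply card_le_mono with n; [|lia]. apply Hn.
    - split. split; auto. intros D HD HDf. destruct (HF'i D HD HDf) as [h1 h2]. split; auto.
      intros z hz; apply Hsub, HD; auto.
      intros G [HGX' HGi] HF'G. apply HF'm; auto. split. intros z hz; apply HX'X; auto.
      intros D HD HDf. destruct (HGi D HD HDf). split; auto. intros z hz; apply HX'X; auto.
    - split. split; auto. intros z hz; apply Hsub, HB'F'; auto.
      intros G [HG HGX'] HBG. apply HB'm; auto. split; auto. intros z hz; apply HX'X; auto.
    - auto. }
  apply not_all_ex_not in Hsub as [y0 Hy0]. apply imply_to_and in Hy0 as [HF's HX's].
  assert (Hy0s : y0 = s) by (apply Hs; auto). subst y0.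
  pose (F0 := fun y => F' y /\ y <> s).
  assert (HF0X' : subset F0 X'). { intros y [h1 h2]. apply NNPP; intro. apply h2. apply Hs; auto. }
  assert (HFex : exists F e, is_base (fin_indep X' (res I X')) F /\ subset F0 F /\
      (forall y, F y -> F0 y \/ y = e)).
  { destruct (classic (exists e, X' e /\ ~ F0 e /\ fin_indep X' (res I X') (set_add F0 e)))
      as [[e [He1 [He2 He3]]]|Hno].
    - exists (set_add F0 e), e. split; [|split; [intros z hz; left; auto | intros z [hz|hz]; auto]].
      split; auto. intros G HG HFG y Hy. apply NNPP; intro Hny.
      assert (Hes : e <> s) by (intro; subst; auto).
      assert (HyX' : X' y) by (apply (proj1 HG); auto).
      assert (Hys : y <> s) by (intro; subst; auto).
      assert (HF'e : ~ F' e) by (intro; apply He2; split; auto).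
      assert (HF'y : ~ F' y) by (intro; apply Hny; left; split; auto).
      assert (Hye : y <> e) by (intro; apply Hny; right; auto).
      destruct (find_dep I X (set_add F' e)) as [De [HDe1 [HDe2 HDe3]]].
      { intros z [hz|hz]; [auto|subst; apply HX'X; auto]. }
      { intro Hfi. apply HF'e. apply (HF'm _ Hfi). intros z hz; left; auto. right; auto. }
      destruct (find_dep I X (set_add F' y)) as [Dy [HDy1 [HDy2 HDy3]]].
      { intros z [hz|hz]; [auto|subst; apply HX'X; auto]. }
      { intro Hfi. apply HF'y. apply (HF'm _ Hfi). intros z hz; left; auto. right; auto. }
      apply (fin2 E I F' De Dy s e y HM); auto.
      + intros D HD HDf. apply (HF'i D HD HDf).
      + intros D HD HDf. apply (proj2 HG D); auto. intros z hz.
        destruct (HD z hz) as [h|[h|h]]; [apply HFG; left; auto| apply HFG; right; auto| subst; auto].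
    - exists F0, s. split; [|split; [intros z hz; auto| intros z hz; left; auto]].
      split.
      + split; auto. intros D HD HDf. destruct (HF'i D (fun z h => proj1 (HD z h)) HDf).
        split; auto. intros z hz. apply HF0X', HD; auto.
      + intros G HG HF0G y Hy. apply NNPP; intro Hny. apply Hno. exists y.
        split. apply (proj1 HG y Hy). split; auto.
        destruct HG as [HG1 HG2]. split. intros z [hz|hz]; [apply HF0X'; auto| subst; auto].
        intros D HD HDf. apply HG2; auto. intros z hz.
        destruct (HD z hz) as [h|h]; [apply HF0G; auto| subst; auto]. }
  destruct HFex as [F [e [HFb [HF0F HFF0]]]].
  assert (HFX' : subset F X') by (apply (proj1 (proj1 HFb))).
  pose (B'' := fun y => B' y /\ y <> s).
  assert (HB''F : subset B'' F). { intros z [h1 h2]. apply HF0F. split; auto. }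
  assert (HB'' : I B''). { apply (Hd B'); auto. intros z [h _]; auto. }
  destruct (HIM B'' F HB'' HB''F (fun z h => HX'E z (HFX' z h))) as [B [HB''B [HB [HBF HBm]]]].
  assert (HBm' : maximal_in (res I X') F B).
  { split. split; auto. intros z hz; auto. split; auto. intros G [HG _] h1 h2. auto. }
  pose proof (finbase_base X' (res I X') F B HMX' HFb HBm') as HBb.
  destruct (Hn F B HFb HBb HBF) as [lFB [Hlen HlFB]].
  assert (HBX : res I X B). { split; auto. intros z hz; apply HX'X, HFX', HBF; auto. }
  assert (Huniq : exists b1, forall y, B y -> ~ B' y -> y = b1).
  { destruct (classic (exists b, B b /\ ~ B' b)) as [[b1 [Hb1 Hb1']]|Hno];
      [exists b1 | exists s; intros y h1 h2; exfalso; apply Hno; eauto].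
    intros b2 Hb2 Hb2'.
    destruct (classic (B' s)) as [HB's|HB's].
    - assert (Hbase : is_base (res I X) (set_add B'' b1)).
      { assert (Hind : res I X (set_add B'' b1)).
        { split. apply (Hd B); auto. intros z [hz|hz]; [auto| subst; auto].
          intros z [hz|hz]; [apply HB'X, (proj1 hz)| subst; apply (proj2 HBX); auto]. }
        apply NNPP; intro Hnb. destruct HMX as (_&_&_&HX3&_).
        destruct (HX3 _ B' Hind Hnb HB'b) as [b [Hb1b [Hb2b Hb3b]]].
        assert (b = s). { apply NNPP; intro. apply Hb2b. left; split; auto. }
        subst b. apply Hb1'. apply (HB'm _ Hb3b).
        intros z hz. destruct (classic (z = s)). right; auto. left; left; split; auto.
        left; right; auto. }
      assert (Hb2in : set_add B'' b1 b2).
      { apply (proj2 Hbase (set_add (set_add B'' b1) b2)).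
        - split. apply (Hd B); auto. intros z [[hz|hz]|hz]; [auto| subst; auto| subst; auto].
          intros z [[hz|hz]|hz]; [apply HB'X, (proj1 hz)| subst; apply (proj2 HBX); auto| subst; apply (proj2 HBX); auto].
        - intros z hz; left; auto.
        - right; auto. }
      destruct Hb2in as [[h _]|h]; [contradiction| auto].
    - exfalso. apply Hb1'. apply (HB'm B HBX); auto.
      intros z hz. apply HB''B. split; auto. intro; subst; auto. }
  destruct Huniq as [b1 Hb1].
  exists (s :: b1 :: lFB). split. simpl; lia.
  intros y [HF'y HB'y]. destruct (classic (y = s)) as [Hys|Hys]. left; auto.
  assert (HFy : F y) by (apply HF0F; split; auto).
  destruct (classic (B y)) as [HBy|HBy].
  - right; left. symmetry. apply Hb1; auto.
  - right; right. apply HlFB. split; auto.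
Qed.

Lemma induct {T} (E : T -> Prop) I (S : T -> Prop) : is_matroid E I ->
  forall l n, n_nearly_finitary n (setminus E (fun x => S x /\ In x l))
                (res I (setminus E (fun x => S x /\ In x l))) ->
  n_nearly_finitary (n + 2 * length l) (setminus E (fun x => S x /\ In x nil))
                (res I (setminus E (fun x => S x /\ In x nil))).
Proof.
  intros HM. induction l as [|a l IH]; intros n Hn.
  - simpl. replace (n + 0) with n by lia. auto.
  - replace (n + 2 * length (a :: l)) with ((n + 2) + 2 * length l) by (simpl; lia).
    apply IH. apply (step E I _ (setminus E (fun x => S x /\ In x (a :: l))) a n HM).
    + intros z [h _]; auto.
    + intros z [h1 h2]. split; auto. intros [h3 h4]. apply h2. split; auto. right; auto.
    + intros y [h1 h2] h3. apply NNPP; intro hne. apply h3. split; auto.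
      intros [h4 [h5|h5]]; auto.
    + auto.
Qed.

Theorem theorem3p4p7 (T : Type) (E : T -> Prop) (I : (T -> Prop) -> Prop)
  (S : T -> Prop) :
  is_matroid E I ->
  nearly_finitary E I ->
  (forall n : nat, ~ n_nearly_finitary n E I) ->
  subset S E -> finite S ->
  is_matroid (del_ground E S) (del_indep E I S) /\
  nearly_finitary (del_ground E S) (del_indep E I S) /\
  (forall n : nat, ~ n_nearly_finitary n (del_ground E S) (del_indep E I S)).
Proof.
  intros HM Hnf Hnn HSE [l Hl].
  split; [|split].
  - apply (res_matroid E I). auto. intros z [h _]; auto.
  - apply (part2 E I S l); auto.
  - intros n Hn.
    assert (HeqS : (fun x => S x /\ In x l) = S).
    { apply functional_extensionality. intro x. apply propositional_extensionality.
      split; [intros [h _]; auto| intros h; split; auto]. }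
    assert (HeqE : setminus E (fun x => S x /\ In x nil) = E).
    { apply functional_extensionality. intro x. apply propositional_extensionality.
      split; [intros [h _]; auto| intros h; split; auto]. intros [_ []]. }
    assert (HeqI : res I E = I).
    { apply functional_extensionality. intro A. apply propositional_extensionality.
      split; [intros [h _]; auto| intros h; split; auto]. apply (proj1 HM A h). }
    pose proof (induct E I S HM l n) as H.
    rewrite HeqS, HeqE, HeqI in H.
    apply (Hnn (n + 2 * length l)). apply H. exact Hn.
Qed.
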